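(* Let $(M,J,g,\nabla)$ be an affine special $\epsilon$-K\''ahler manifold of real dimension $2n$, let $U\subset M$ be a connected open subset and $\phi:U\to V=\mathbb{C}_\epsilon^{2n}$ an $\epsilon$-K\''ahlerian Lagrangian immersion inducing the special geometric data on $U$, such that $\tilde z^i=z^i\circ\phi$, $i=1,\dots,n$, form a system of holomorphic coordinates on $U$ (special holomorphic coordinates) with image $\tilde U\subset\mathbb{C}_\epsilon^n$, and let $F:\tilde U\to\mathbb{C}_\epsilon$ be a holomorphic prepotential, i.e. $\phi(U)=\{(z,w)\in\mathbb{C}_\epsilon^{2n}: z\in\tilde U,\ w_i=\partial F/\partial z^i(z),\ i=1,\dots,n\}$ ($F$ is determined up to an additive constant). Then $F$ can be chosen homogeneous of degree $2$ if and only if the special holomorphic coordinates are conical, i.e. if and only if $\phi$ is conical.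
   Context: Let $\epsilon\in\{-1,1\}$, $\mathbb{C}_\epsilon=\mathbb{R}[i_\epsilon]$, $i_\epsilon^2=\epsilon$, conjugation $\overline{a+i_\epsilon b}=a-i_\epsilon b$. An $\epsilon$-K\''ahler manifold $(M,J,g)$ is pseudo-Riemannian with parallel $g$-skew $J$, $J^2=\epsilon\mathrm{Id}$, K\''ahler form $\omega=\epsilon g(J\cdot,\cdot)$; affine special means there is a flat torsion-free $\nabla$ with $\nabla\omega=0$, $(\nabla_XJ)Y=(\nabla_YJ)X$. A function is ($\epsilon$-)holomorphic if $df\,J=i_\epsilon df$. On $V=\mathbb{C}_\epsilon^{2n}$ take coordinates $(z^i,w_i)$, $\Omega=\sum dz^i\wedge dw_i$, $\gamma=i_\epsilon\Omega(\cdot,\bar\cdot)$; a holomorphic immersion $\phi$ is $\epsilon$-K\''ahlerian if $\phi^*\gamma$ is nondegenerate, Lagrangian if $\phi^*\Omega=0$; it induces $g=\phi^*\mathrm{Re}\,\gamma$ and the flat connection $\nabla$ having $(\mathrm{Re}\,z^i\circ\phi,\mathrm{Re}\,w_i\circ\phi)$ as affine coordinates. $\phi$ is conical if the position vector field $\xi^V_p=p$ of $V$ is tangent along $\phi$, i.e. $\xi^V_{\phi(p)}\in d\phi_pT_pU$ for all $p$. A function $F$ on $\tilde U$ is homogeneous of degree $k$ if for every $z\in\tilde U$ there is a neighbourhood $W\subset\mathbb{C}_\epsilon$ of $1$ with $\lambda z\in\tilde U$ and $F(\lambda z)=\lambda^kF(z)$ for all $\lambda\in W$. *)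

(* Defs.v *)
From HB Require Import structures.
From mathcomp Require Import all_boot all_order all_algebra.
From mathcomp Require Import all_classical all_reals all_analysis.
Set Implicit Arguments. Unset Strict Implicit. Unset Printing Implicit Defensive.
Import Order.TTheory GRing.Theory Num.Theory.
Import numFieldNormedType.Exports.
Local Open Scope classical_set_scope.
Local Open Scope ring_scope.

(* eps-complex numbers C_eps = R[i_eps], i_eps^2 = eps, represented as pairs
   (a, b) standing for a + i_eps b. *)
Definition Ce (R : realType) := (R * R)%type.

Section Ceps.
Variables (R : realType) (eps : R).

Definition ce_mul (l m : Ce R) : Ce R :=
  (l.1 * m.1 + eps * (l.2 * m.2), l.1 * m.2 + l.2 * m.1).
Definition ce_add (l m : Ce R) : Ce R := (l.1 + m.1, l.2 + m.2).
Definition ce_sub (l m : Ce R) : Ce R := (l.1 - m.1, l.2 - m.2).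
Definition ce_conj (l : Ce R) : Ce R := (l.1, - l.2).
Definition ce_one : Ce R := (1, 0).
Definition ce_i : Ce R := (0, 1).
Definition ce_exp (l : Ce R) (k : nat) : Ce R := iter k (ce_mul l) ce_one.

(* C_eps^n, represented as (real parts, i_eps-parts) *)
Definition Cn (n : nat) := ('rV[R]_n * 'rV[R]_n)%type.

Definition coord {n} (i : 'I_n) (z : Cn n) : Ce R := (z.1 0 i, z.2 0 i).
Definition ebasis {n} (i : 'I_n) : Cn n := (delta_mx 0 i, 0).
Definition ce_smul {n} (l : Ce R) (z : Cn n) : Cn n :=
  (l.1 *: z.1 + (eps * l.2) *: z.2, l.1 *: z.2 + l.2 *: z.1).
Definition J1 (l : Ce R) : Ce R := ce_mul ce_i l.
Definition Jn {n} (z : Cn n) : Cn n := ce_smul ce_i z.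
Definition JV {n} (p : Cn n * Cn n) : Cn n * Cn n := (Jn p.1, Jn p.2).
Definition ce_sum {n} (f : 'I_n -> Ce R) : Ce R :=
  (\sum_(i < n) (f i).1, \sum_(i < n) (f i).2).

(* f is (eps-)holomorphic on U: real differentiable with C_eps-linear
   differential (df J = J df), for given complex structures on source/target *)
Definition holomorphic_on {A B : normedModType R} (JA : A -> A) (JB : B -> B)
  (U : set A) (f : A -> B) : Prop :=
  forall z, U z -> differentiable f z /\ forall v, 'd f z (JA v) = JB ('d f z v).

(* V = C_eps^{2n} with coordinates (z^i, w_i):
   Omega = sum dz^i /\ dw_i, gamma = i_eps Omega(., conj .) *)
Definition Omega {n} (p q : Cn n * Cn n) : Ce R :=
  ce_sum (fun i => ce_sub (ce_mul (coord i p.1) (coord i q.2))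
                          (ce_mul (coord i p.2) (coord i q.1))).
Definition conjV {n} (p : Cn n * Cn n) : Cn n * Cn n :=
  ((p.1.1, - p.1.2), (p.2.1, - p.2.2)).
Definition gamma {n} (p q : Cn n * Cn n) : Ce R := ce_mul ce_i (Omega p (conjV q)).

(* the map z |-> (z, w(z)), i.e. phi expressed in the special holomorphic
   coordinates z = z o phi *)
Definition graph {n} (w : Cn n -> Cn n) (z : Cn n) : Cn n * Cn n := (z, w z).

Definition holomorphic_immersion {n} (U : set (Cn n)) (phi : Cn n -> Cn n * Cn n) :=
  holomorphic_on Jn JV U phi /\ forall z, U z -> injective ('d phi z).
Definition eps_Kaehlerian {n} (U : set (Cn n)) (phi : Cn n -> Cn n * Cn n) :=
  forall z, U z -> forall u,
    (forall v, gamma ('d phi z u) ('d phi z v) = (0, 0)) -> u = 0.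
Definition Lagrangian {n} (U : set (Cn n)) (phi : Cn n -> Cn n * Cn n) :=
  forall z, U z -> forall u v, Omega ('d phi z u) ('d phi z v) = (0, 0).
(* conical: the position vector field xi^V_{phi(p)} = phi(p) lies in d phi_p T_p U *)
Definition conical {n} (U : set (Cn n)) (phi : Cn n -> Cn n * Cn n) :=
  forall z, U z -> exists v, 'd phi z v = phi z.

(* F is a prepotential for phi = graph w on U: w_i = dF/dz^i (the complex
   partial derivative of a holomorphic F equals dF(e_i)) *)
Definition prepotential {n} (U : set (Cn n)) (w : Cn n -> Cn n) (F : Cn n -> Ce R) :=
  holomorphic_on Jn J1 U F /\
  forall z, U z -> forall i, 'd F z (ebasis i) = coord i (w z).

Definition homogeneous {n} (U : set (Cn n)) (k : nat) (F : Cn n -> Ce R) :=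
  forall z, U z -> exists W : set (Ce R), nbhs ce_one W /\
    forall l, W l -> U (ce_smul l z) /\ F (ce_smul l z) = ce_mul (ce_exp l k) (F z).

End Ceps.

(* Main.v *)
Require Import Defs.
From HB Require Import structures.
From mathcomp Require Import all_boot all_order all_algebra.
From mathcomp Require Import all_classical all_reals all_analysis.
Import Order.TTheory GRing.Theory Num.Theory.
Import numFieldNormedType.Exports.
Local Open Scope classical_set_scope.
Local Open Scope ring_scope.
From mathcomp Require Import ring lra.

Set Implicit Arguments. Unset Strict Implicit. Unset Printing Implicit Defensive.


Section Gen.
Variable R : realType.

Lemma lin_comp_diff (V W X : normedModType R) (L : W -> X) (f : V -> W) x :
  linear L -> continuous L -> differentiable f x ->
  differentiable (L \o f) x /\ forall v, 'd (L \o f) x v = L ('d f x v).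
Proof.
move=> lL cL df.
pose lM := GRing.isLinear.Build _ _ _ _ _ lL.
pose LL : {linear W -> X} := HB.pack L lM.
have dL : differentiable LL (f x) by exact: linear_differentiable.
split; first exact: differentiable_comp.
move=> v; rewrite diff_comp //=; have -> : L = LL by []; rewrite diff_lin //.
Qed.

Lemma fst_lin (V W : normedModType R) : linear (@fst V W).
Proof. by []. Qed.
Lemma snd_lin (V W : normedModType R) : linear (@snd V W).
Proof. by []. Qed.
Lemma fst_cont (V W : normedModType R) : continuous (@fst V W).
Proof. move=> [a b]; exact: cvg_fst. Qed.
Lemma snd_cont (V W : normedModType R) : continuous (@snd V W).
Proof. move=> [a b]; exact: cvg_snd. Qed.
Lemma ent_lin n (i : 'I_n) : linear (fun u : 'rV[R]_n => u 0 i : R^o).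
Proof. by move=> a u v; rewrite !mxE. Qed.
Lemma ent_cont n (i : 'I_n) : continuous (fun u : 'rV[R]_n => u 0 i : R^o).
Proof. exact: coord_continuous. Qed.
Lemma did_val (V : normedModType R) (x v : V) : differentiable (@id V) x /\ 'd (@id V) x v = v.
Proof. have [d E] : is_diff x (@id V) (@id V) by apply: is_diff_id. by split => //; rewrite E. Qed.

Lemma line_derive (V W : normedModType R) (f : V -> W) (x v : V) (t : R) :
  differentiable f (t *: v + x) ->
  is_derive t (1:R) (fun h : R => f (h *: v + x)) ('d f (t *: v + x) v).
Proof.
move=> df.
pose phi := ( *:%R^~ v : R -> V) + cst x.
have hd : is_diff t phi (( *:%R^~ v : R -> V) + 0) by exact: is_diffD.
have dphi : differentiable phi t by exact: ex_diff.
have dphiE : 'd phi t 1 = v by rewrite diff_val /= addr0 scale1r.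
have -> : (fun h : R => f (h *: v + x)) = f \o phi by [].
have -> : t *: v + x = phi t by [].
apply: DeriveDef.
  apply: diff_derivable; exact: differentiable_comp.
rewrite deriveE; last exact: differentiable_comp.
by rewrite diff_comp //= dphiE.
Qed.

Lemma isdM (V : normedModType R) (f g : V -> R) (t v : V) (df dg : R) :
  is_derive t v f df -> is_derive t v g dg ->
  is_derive t v (fun s => f s * g s) (f t * dg + g t * df).
Proof.
case=> d1 <-; case=> d2 <-; have -> : (fun s => f s * g s) = f * g by [].
apply: DeriveDef; [exact: derivableM | by rewrite deriveM].
Qed.
Lemma isdD (V : normedModType R) (f g : V -> R) (t v : V) (df dg : R) :
  is_derive t v f df -> is_derive t v g dg ->
  is_derive t v (fun s => f s + g s) (df + dg).
Proof.
case=> d1 <-; case=> d2 <-; have -> : (fun s => f s + g s) = f + g by [].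
apply: DeriveDef; [exact: derivableD | by rewrite deriveD].
Qed.
Lemma isdB (V : normedModType R) (f g : V -> R) (t v : V) (df dg : R) :
  is_derive t v f df -> is_derive t v g dg ->
  is_derive t v (fun s => f s - g s) (df - dg).
Proof.
case=> d1 <-; case=> d2 <-; have -> : (fun s => f s - g s) = f - g by [].
apply: DeriveDef; [exact: derivableB | by rewrite deriveB].
Qed.
Lemma isdZ (V : normedModType R) (f : V -> R) (k : R) (t v : V) (df : R) :
  is_derive t v f df -> is_derive t v (fun s => k * f s) (k * df).
Proof.
case=> d1 <-; have -> : (fun s => k * f s) = k \*: f by [].
apply: DeriveDef; [exact: derivableZ | by rewrite deriveZ].
Qed.
Lemma isdC (V : normedModType R) (k : R) (t v : V) : is_derive t v (fun _ : V => k) 0.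
Proof. exact: is_derive_cst. Qed.
Lemma isdI (t : R) : is_derive t (1:R) (fun s : R => s) 1.
Proof. exact: is_derive_id. Qed.
Lemma isdA (a b t : R) : is_derive t (1:R) (fun s : R => a + s * b) b.
Proof.
case: (isdD (isdC a t 1) (isdM (isdI t) (isdC b t 1))) => H1 H2.
by apply: DeriveDef; [exact: H1 | rewrite H2 mulr0 mulr1 !add0r].
Qed.
Lemma isdV (f : R -> R) (t df : R) : f t != 0 -> is_derive t (1:R) f df ->
  is_derive t (1:R) (fun s => (f s)^-1) (- (f t) ^- 2 * df).
Proof. move=> h hf; exact: is_deriveV. Qed.
Lemma isd_sum (V : normedModType R) m (h : 'I_m -> V -> R) (t v : V) (dh : 'I_m -> R) :
  (forall i, is_derive t v (h i) (dh i)) ->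
  is_derive t v (fun s => \sum_(i < m) h i s) (\sum_(i < m) dh i).
Proof.
move=> H; have H2 := is_derive_sum H.
have -> : (fun s => \sum_(i < m) h i s) = \sum_(i < m) h i.
  by apply/funext => s; rewrite fct_sumE.
exact: H2.
Qed.
Lemma diff_isd (V W : normedModType R) (f : V -> W) (x v : V) :
  differentiable f x -> is_derive x v f ('d f x v).
Proof. move=> d; apply: DeriveDef; [exact: diff_derivable | exact: deriveE]. Qed.
Lemma isd_uniq (V W : normedModType R) (f : V -> W) (x v : V) (a b : W) :
  is_derive x v f a -> is_derive x v f b -> a = b.
Proof. by case=> _ <-; case=> _ <-. Qed.
End Gen.

Section Main.
Variables (R : realType) (eps : R) (n : nat).

Definition c1 (i : 'I_n) (u : Cn R n) : R := u.1 0 i.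
Definition c2 (i : 'I_n) (u : Cn R n) : R := u.2 0 i.

Lemma c1_lin i : linear (c1 i : Cn R n -> R^o).
Proof. by move=> a u v; rewrite /c1 /= !mxE. Qed.
Lemma c2_lin i : linear (c2 i : Cn R n -> R^o).
Proof. by move=> a u v; rewrite /c2 /= !mxE. Qed.
Lemma c1_cont i : continuous (c1 i : Cn R n -> R^o).
Proof.
move=> u; apply: (@continuous_comp _ _ _ fst (fun r : 'rV[R]_n => r 0 i)).
  exact: cvg_fst.
exact: coord_continuous.
Qed.
Lemma c2_cont i : continuous (c2 i : Cn R n -> R^o).
Proof.
move=> u; apply: (@continuous_comp _ _ _ snd (fun r : 'rV[R]_n => r 0 i)).
  exact: cvg_snd.
exact: coord_continuous.
Qed.

Lemma fst_sum (U V : zmodType) m (F : 'I_m -> U * V) :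
  (\sum_(i < m) F i).1 = \sum_(i < m) (F i).1.
Proof. by elim/big_rec2: _ => //= i a b _ ->. Qed.
Lemma snd_sum (U V : zmodType) m (F : 'I_m -> U * V) :
  (\sum_(i < m) F i).2 = \sum_(i < m) (F i).2.
Proof. by elim/big_rec2: _ => //= i a b _ ->. Qed.
Lemma c1_sum m (F : 'I_m -> Cn R n) j :
  c1 j (\sum_(i < m) F i) = \sum_(i < m) c1 j (F i).
Proof. by rewrite /c1 fst_sum summxE. Qed.
Lemma c2_sum m (F : 'I_m -> Cn R n) j :
  c2 j (\sum_(i < m) F i) = \sum_(i < m) c2 j (F i).
Proof. by rewrite /c2 snd_sum summxE. Qed.

Lemma Jn_e i : Jn eps (@ebasis R n i) = (0, delta_mx 0 i).
Proof. by rewrite /Jn /ce_smul /ebasis /ce_i /= !scale0r scaler0 !add0r scale1r. Qed.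

Lemma decomp (y : Cn R n) :
  y = \sum_(i < n) (c1 i y *: @ebasis R n i + c2 i y *: Jn eps (@ebasis R n i)).
Proof.
case: y => y1 y2; rewrite [RHS]surjective_pairing; congr pair.
  rewrite fst_sum [LHS]row_sum_delta; apply: eq_bigr => i _.
  by rewrite Jn_e /= scaler0 addr0.
rewrite snd_sum [LHS]row_sum_delta; apply: eq_bigr => i _.
by rewrite Jn_e /= scaler0 add0r.
Qed.

Lemma c1J j u : c1 j (Jn eps u) = eps * c2 j u.
Proof. by rewrite /c1 /c2 /Jn /ce_smul /ce_i /= !mxE; ring. Qed.
Lemma c2J j u : c2 j (Jn eps u) = c1 j u.
Proof. by rewrite /c1 /c2 /Jn /ce_smul /ce_i /= !mxE; ring. Qed.
Lemma c1Z j a u : c1 j (a *: u) = a * c1 j u.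
Proof. by rewrite /c1 /= mxE. Qed.
Lemma c2Z j a u : c2 j (a *: u) = a * c2 j u.
Proof. by rewrite /c2 /= mxE. Qed.
Lemma c1D j u v : c1 j (u + v) = c1 j u + c1 j v.
Proof. by rewrite /c1 /= mxE. Qed.
Lemma c2D j u v : c2 j (u + v) = c2 j u + c2 j v.
Proof. by rewrite /c2 /= mxE. Qed.

Lemma euler_n (A : {linear Cn R n -> Cn R n}) :
  (forall v, A (Jn eps v) = Jn eps (A v)) -> forall y j,
  c1 j (A y) = \sum_(i < n) (c1 i y * c1 j (A (@ebasis R n i)) + eps * (c2 i y * c2 j (A (@ebasis R n i)))) /\
  c2 j (A y) = \sum_(i < n) (c1 i y * c2 j (A (@ebasis R n i)) + c2 i y * c1 j (A (@ebasis R n i))).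
Proof.
move=> HJ y j; have E := decomp y; split; rewrite {1}E linear_sum ?c1_sum ?c2_sum;
  apply: eq_bigr => i _; rewrite linearD !linearZ HJ /= ?c1D ?c2D ?c1Z ?c2Z ?c1J ?c2J; ring.
Qed.

Lemma euler_1 (A : {linear Cn R n -> Ce R}) :
  (forall v, A (Jn eps v) = J1 eps (A v)) -> forall y,
  (A y).1 = \sum_(i < n) (c1 i y * (A (@ebasis R n i)).1 + eps * (c2 i y * (A (@ebasis R n i)).2)) /\
  (A y).2 = \sum_(i < n) (c1 i y * (A (@ebasis R n i)).2 + c2 i y * (A (@ebasis R n i)).1).
Proof.
move=> HJ y; have E := decomp y; split; rewrite {1}E linear_sum ?fst_sum ?snd_sum;
  apply: eq_bigr => i _; rewrite linearD !linearZ HJ /= /J1 /ce_mul /ce_i /= -![_ *: _]/(_ * _); ring.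
Qed.


Lemma c1_comp (V : normedModType R) (f : V -> Cn R n) x i : differentiable f x ->
  differentiable (fun y => c1 i (f y)) x /\ forall v, 'd (fun y => c1 i (f y)) x v = c1 i ('d f x v).
Proof. exact: (lin_comp_diff (c1_lin i) (@c1_cont i)). Qed.
Lemma c2_comp (V : normedModType R) (f : V -> Cn R n) x i : differentiable f x ->
  differentiable (fun y => c2 i (f y)) x /\ forall v, 'd (fun y => c2 i (f y)) x v = c2 i ('d f x v).
Proof. exact: (lin_comp_diff (c2_lin i) (@c2_cont i)). Qed.
Lemma c1_isd (V : normedModType R) (f : V -> Cn R n) x v i : differentiable f x ->
  is_derive x v (fun y => c1 i (f y)) (c1 i ('d f x v)).
Proof. by move=> /(c1_comp i) [d E]; rewrite -E; exact: diff_isd. Qed.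
Lemma c2_isd (V : normedModType R) (f : V -> Cn R n) x v i : differentiable f x ->
  is_derive x v (fun y => c2 i (f y)) (c2 i ('d f x v)).
Proof. by move=> /(c2_comp i) [d E]; rewrite -E; exact: diff_isd. Qed.
Lemma c1_isd_id (x v : Cn R n) i : is_derive x v (fun y => c1 i y) (c1 i v).
Proof.
have [did E] := did_val x v.
by have := @c1_isd _ id x v i did; rewrite E.
Qed.
Lemma c2_isd_id (x v : Cn R n) i : is_derive x v (fun y => c2 i y) (c2 i v).
Proof.
have [did E] := did_val x v.
by have := @c2_isd _ id x v i did; rewrite E.
Qed.

End Main.

Section Main.
Variables (R : realType) (eps : R) (n : nat).
Lemma graph_diff (w : Cn R n -> Cn R n) z : differentiable (graph w) z ->
  differentiable w z /\ forall v, 'd (graph w) z v = (v, 'd w z v).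
Proof.
move=> dg.
have [dw Ew] := lin_comp_diff (@snd_lin R _ _) (@snd_cont R _ _) dg.
have [di Ei] := lin_comp_diff (@fst_lin R _ _) (@fst_cont R _ _) dg.
have E : snd \o graph w = w by [].
rewrite E in dw Ew.
have E2 : fst \o graph w = id by [].
rewrite E2 in di Ei.
split => // v.
have [_ E3] := did_val z v.
rewrite [LHS]surjective_pairing -Ew -Ei; congr pair.
exact: E3.
Qed.
Lemma smul_decomp mu (u : Cn R n) : ce_smul eps mu u = mu.1 *: u + mu.2 *: Jn eps u.
Proof.
rewrite /Jn /ce_smul /ce_i /=; congr pair; apply/rowP => k; rewrite !mxE /=; ring.
Qed.

Lemma cJ_smul (A : {linear Cn R n -> Cn R n}) :
  (forall v, A (Jn eps v) = Jn eps (A v)) -> forall mu u,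
  A (ce_smul eps mu u) = ce_smul eps mu (A u).
Proof. by move=> HJ mu u; rewrite !smul_decomp linearD !linearZ HJ. Qed.

Lemma c1e i j : c1 i (@ebasis R n j) = (i == j)%:R.
Proof. by rewrite /c1 /ebasis /= mxE eqxx. Qed.
Lemma c2e i j : c2 i (@ebasis R n j) = 0.
Proof. by rewrite /c2 /ebasis /= mxE. Qed.
Lemma sum_delta (f : 'I_n -> R) j : \sum_(i < n) f i * (i == j)%:R = f j.
Proof.
rewrite (bigD1 j) //= eqxx mulr1 big1 ?addr0 // => i /negbTE ->; by rewrite mulr0.
Qed.

Lemma lag_sym (dw : Cn R n -> Cn R n) :
  (forall u v, Omega eps (u, dw u) (v, dw v) = (0, 0)) -> forall j k,
  c1 j (dw (@ebasis R n k)) = c1 k (dw (@ebasis R n j)) /\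
  c2 j (dw (@ebasis R n k)) = c2 k (dw (@ebasis R n j)).
Proof.
move=> H j k; have := H (@ebasis R n j) (@ebasis R n k).
rewrite /Omega /ce_sum /ce_sub /ce_mul /coord /= => -[E1 E2].
have F1 : \sum_(i < n) (c1 i (dw (ebasis R k)) * (i == j)%:R - c1 i (dw (ebasis R j)) * (i == k)%:R) = 0.
  rewrite -[RHS]E1; apply: eq_bigr => i _.
  rewrite /c1 /c2 !mxE !eqxx /=; ring.
have F2 : \sum_(i < n) (c2 i (dw (ebasis R k)) * (i == j)%:R - c2 i (dw (ebasis R j)) * (i == k)%:R) = 0.
  rewrite -[RHS]E2; apply: eq_bigr => i _.
  rewrite /c1 /c2 !mxE !eqxx /=; ring.
move: F1 F2; rewrite !sumrB !sum_delta => /eqP; rewrite subr_eq0 => /eqP ->.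
by move/eqP; rewrite subr_eq0 => /eqP ->.
Qed.

End Main.

Section Main.
Variables (R : realType) (eps : R) (n : nat).

Definition E1 (w : Cn R n -> Cn R n) (y : Cn R n) : R :=
  \sum_(i < n) (c1 i y * c1 i (w y) + eps * (c2 i y * c2 i (w y))).
Definition E2 (w : Cn R n -> Cn R n) (y : Cn R n) : R :=
  \sum_(i < n) (c1 i y * c2 i (w y) + c2 i y * c1 i (w y)).

Lemma E1_isd (w : Cn R n -> Cn R n) z v : differentiable w z ->
  is_derive z v (E1 w) (\sum_(i < n) ((c1 i z * c1 i ('d w z v) + c1 i (w z) * c1 i v)
     + eps * (c2 i z * c2 i ('d w z v) + c2 i (w z) * c2 i v))).
Proof.
move=> dw; apply: isd_sum => i; apply: isdD; first apply: isdM.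
- exact: c1_isd_id.
- exact: c1_isd.
apply: isdZ; apply: isdM; [exact: c2_isd_id | exact: c2_isd].
Qed.

Lemma E2_isd (w : Cn R n -> Cn R n) z v : differentiable w z ->
  is_derive z v (E2 w) (\sum_(i < n) ((c1 i z * c2 i ('d w z v) + c2 i (w z) * c1 i v)
     + (c2 i z * c1 i ('d w z v) + c1 i (w z) * c2 i v))).
Proof.
move=> dw; apply: isd_sum => i; apply: isdD; apply: isdM.
- exact: c1_isd_id.
- exact: c2_isd.
- exact: c2_isd_id.
- exact: c1_isd.
Qed.


Lemma point_facts (Ut : set (Cn R n)) (w : Cn R n -> Cn R n) z :
  holomorphic_immersion eps Ut (graph w) -> Lagrangian eps Ut (graph w) -> Ut z ->
  [/\ differentiable w z, (forall v, 'd (graph w) z v = (v, 'd w z v)),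
      (forall v, 'd w z (Jn eps v) = Jn eps ('d w z v)) &
      (forall u v, Omega eps (u, 'd w z u) (v, 'd w z v) = (0, 0))].
Proof.
move=> [Hh _] HL Uz; have [dg HJ] := Hh z Uz.
have [dw Eg] := graph_diff dg.
split => //.
- by move=> v; have := HJ v; rewrite !Eg /JV /= => -[].
- by move=> u v; have := HL z Uz u v; rewrite !Eg.
Qed.

Lemma cvg_line1 : (fun h : R => (1 + h * 1, (0:R))) @ (0:R) --> ((1:R), (0:R)).
Proof.
have -> : ((1:R), (0:R)) = (1 + 0 * 1, 0) by rewrite mul0r addr0.
have H1 : (fun h : R => 1 + h * 1) @ (0:R) --> (1 + 0 * 1 : R).
  apply: cvgD; first exact: cvg_cst.
  apply: cvgM; [exact: cvg_id | exact: cvg_cst].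
have H2 : (fun h : R => (0:R)) @ (0:R) --> (0:R) by exact: cvg_cst.
exact: (cvg_pair H1 H2).
Qed.


Lemma smul_real (h : R) (y : Cn R n) : ce_smul eps (1 + h * 1, 0) y = h *: y + y.
Proof.
case: y => y1 y2; rewrite /ce_smul /=; congr pair; apply/rowP => k; rewrite !mxE /=; ring.
Qed.

Lemma hom_deriv_p (p : Ce R -> R^o) (Ut : set (Cn R n)) (F : Cn R n -> Ce R) y :
  linear p -> continuous p ->
  (forall h u, p (ce_mul eps (ce_exp eps (1 + h * 1, 0) 2) u) = (1 + h * 1) * (1 + h * 1) * p u) ->
  differentiable F y -> homogeneous eps Ut 2 F -> Ut y ->
  p ('d F y y) = 2 * p (F y).
Proof.
move=> pl pc Hp dF Hh Uy; have [W [HW HWh]] := Hh y Uy.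
have [dg Eg] := lin_comp_diff pl pc dF.
have dg' : differentiable (p \o F) (0 *: y + y) by rewrite scale0r add0r.
have L := line_derive dg'; rewrite scale0r add0r Eg in L.
have Hn : \forall h \near (0:R), (1 + h * 1) * (1 + h * 1) * p (F y) = (p \o F) (h *: y + y).
  have H0 : \forall h \near (0:R), W (1 + h * 1, 0) := cvg_line1 HW.
  near=> h; have Wh : W (1 + h * 1, 0) by near: h.
  have [_ E] := HWh _ Wh.
  by rewrite /= -smul_real E Hp.
have L2 : is_derive (0:R) (1:R) (fun h : R => (1 + h * 1) * (1 + h * 1) * p (F y))
   ((1 + 0 * 1) * (1 + 0 * 1) * 0 + p (F y) * ((1 + 0 * 1) * 1 + (1 + 0 * 1) * 1)).
  have A1 := isdA (1:R) 1 0.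
  have A2 := isdM A1 A1.
  exact: (isdM A2 (isdC (p (F y)) (0:R) (1:R))).
have L3 := near_eq_is_derive Hn L2.
rewrite (isd_uniq L L3); ring.
Unshelve. all: by end_near.
Qed.

Lemma hom_deriv (Ut : set (Cn R n)) (F : Cn R n -> Ce R) y :
  differentiable F y -> homogeneous eps Ut 2 F -> Ut y ->
  ('d F y y).1 = 2 * (F y).1 /\ ('d F y y).2 = 2 * (F y).2.
Proof.
move=> dF Hh Uy; split.
  apply: (@hom_deriv_p fst Ut) => //; first by move=> [a b]; exact: cvg_fst.
  move=> h u; rewrite /ce_mul /ce_exp /ce_one /=; ring.
apply: (@hom_deriv_p snd Ut) => //; first by move=> [a b]; exact: cvg_snd.
move=> h u; rewrite /ce_mul /ce_exp /ce_one /=; ring.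
Qed.

Lemma fwd (Ut : set (Cn R n)) (w : Cn R n -> Cn R n) (F : Cn R n -> Ce R) :
  open Ut -> holomorphic_immersion eps Ut (graph w) -> Lagrangian eps Ut (graph w) ->
  prepotential eps Ut w F -> homogeneous eps Ut 2 F -> conical Ut (graph w).
Proof.
move=> oU Hi HL [HF HFe] Hh z Uz.
have [dw Eg HJ HO] := point_facts Hi HL Uz.
have EE : forall y, Ut y -> E1 w y = 2 * (F y).1 /\ E2 w y = 2 * (F y).2.
  move=> y Uy; have [dF HJF] := HF y Uy.
  have [h1 h2] := hom_deriv dF Hh Uy.
  have [e1 e2] := euler_1 (A := 'd F y) HJF y.
  rewrite -h1 -h2 e1 e2; split; apply: eq_bigr => i _; rewrite HFe //.
have nU : nbhs z Ut by apply: open_nbhs_nbhs; split.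
have [dF HJF] := HF z Uz.
have [dF1 EF1] := lin_comp_diff (@fst_lin R R R) (@fst_cont R R R) dF.
have [dF2 EF2] := lin_comp_diff (@snd_lin R R R) (@snd_cont R R R) dF.
have K1 : forall j, c1 j ('d w z z) = c1 j (w z).
  move=> j.
  have D1 := E1_isd (ebasis R j) dw.
  have G1 : is_derive z (ebasis R j) (fun y => 2 * (F y).1) (2 * ('d F z (ebasis R j)).1).
    rewrite -EF1; apply: isdZ; exact: diff_isd.
  have Hn : \forall y \near z, 2 * (F y).1 = E1 w y.
    by apply: filterS nU => y /EE [-> _].
  have G1' := near_eq_is_derive Hn G1.
  have := isd_uniq D1 G1'; rewrite HFe //=.
  have -> : \sum_(i < n) ((c1 i z * c1 i ('d w z (ebasis R j)) + c1 i (w z) * c1 i (ebasis R j))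
     + eps * (c2 i z * c2 i ('d w z (ebasis R j)) + c2 i (w z) * c2 i (ebasis R j))) =
     \sum_(i < n) (c1 i z * c1 j ('d w z (ebasis R i)) + eps * (c2 i z * c2 j ('d w z (ebasis R i))))
     + \sum_(i < n) c1 i (w z) * (i == j)%:R.
    rewrite -big_split; apply: eq_bigr => i _ /=.
    have [s1 s2] := lag_sym HO i j.
    rewrite s1 s2 c1e c2e; ring.
  rewrite sum_delta; have [-> _] := euler_n HJ z j.
  move=> E; rewrite /c1 /c2 in E *; lra.
have K2 : forall j, c2 j ('d w z z) = c2 j (w z).
  move=> j.
  have D1 := E2_isd (ebasis R j) dw.
  have G1 : is_derive z (ebasis R j) (fun y => 2 * (F y).2) (2 * ('d F z (ebasis R j)).2).
    rewrite -EF2; apply: isdZ; exact: diff_isd.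
  have Hn : \forall y \near z, 2 * (F y).2 = E2 w y.
    by apply: filterS nU => y /EE [_ ->].
  have G1' := near_eq_is_derive Hn G1.
  have := isd_uniq D1 G1'; rewrite HFe //=.
  have -> : \sum_(i < n) ((c1 i z * c2 i ('d w z (ebasis R j)) + c2 i (w z) * c1 i (ebasis R j))
     + (c2 i z * c1 i ('d w z (ebasis R j)) + c1 i (w z) * c2 i (ebasis R j))) =
     \sum_(i < n) (c1 i z * c2 j ('d w z (ebasis R i)) + c2 i z * c1 j ('d w z (ebasis R i)))
     + \sum_(i < n) c2 i (w z) * (i == j)%:R.
    rewrite -big_split; apply: eq_bigr => i _ /=.
    have [s1 s2] := lag_sym HO i j.
    rewrite s1 s2 c1e c2e; ring.
  rewrite sum_delta; have [_ ->] := euler_n HJ z j.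
  move=> E; rewrite /c1 /c2 in E *; lra.
exists z; rewrite Eg /graph; congr pair.
rewrite [LHS]surjective_pairing [RHS]surjective_pairing; congr pair; apply/rowP => k.
  exact: K1.
exact: K2.
Qed.

End Main.
Section Main.
Variables (R : realType) (eps : R) (n : nat).

Lemma isd_ext (V W : normedModType R) (f g : V -> W) x v a :
  (forall s, f s = g s) -> is_derive x v f a -> is_derive x v g a.
Proof. by move=> fg; have -> : f = g by apply/funext. Qed.

Lemma c1_smul mu (u : Cn R n) j : c1 j (ce_smul eps mu u) = mu.1 * c1 j u + eps * mu.2 * c2 j u.
Proof. by rewrite /c1 /c2 /ce_smul /= !mxE. Qed.
Lemma c2_smul mu (u : Cn R n) j : c2 j (ce_smul eps mu u) = mu.1 * c2 j u + mu.2 * c1 j u.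
Proof. by rewrite /c1 /c2 /ce_smul /= !mxE. Qed.
Lemma smul_one (z : Cn R n) : ce_smul eps (ce_one R) z = z.
Proof.
case: z => y1 y2; rewrite /ce_smul /ce_one /=; congr pair; apply/rowP => k; rewrite !mxE /=; ring.
Qed.
Lemma path_eq (t a b : R) (z : Cn R n) :
  ce_smul eps (1 + t * a, 0 + t * b) z = t *: ce_smul eps (a, b) z + z.
Proof.
case: z => y1 y2; rewrite /ce_smul /=; congr pair; apply/rowP => k; rewrite !mxE /=; ring.
Qed.
Lemma smul_cont (z : Cn R n) : continuous (fun l : Ce R => ce_smul eps l z).
Proof.
move=> l0.
have f1 : (fun l : Ce R => l.1) @ l0 --> l0.1 by case: l0 => a b; exact: cvg_fst.
have f2 : (fun l : Ce R => l.2) @ l0 --> l0.2 by clear f1; case: l0 => a b; exact: cvg_snd.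
have f3 : (fun l : Ce R => eps * l.2) @ l0 --> eps * l0.2.
  by apply: cvgM => //; exact: cvg_cst.
have H1 : (fun l : Ce R => l.1 *: z.1 + (eps * l.2) *: z.2) @ l0 --> (l0.1 *: z.1 + (eps * l0.2) *: z.2).
  by apply: cvgD; apply: cvgZr_tmp.
have H2 : (fun l : Ce R => l.1 *: z.2 + l.2 *: z.1) @ l0 --> (l0.1 *: z.2 + l0.2 *: z.1).
  by apply: cvgD; apply: cvgZr_tmp.
exact: (cvg_pair H1 H2).
Qed.

Lemma ball_oneP (l : Ce R) d : ball (ce_one R) d l <-> `|1 - l.1| < d /\ `|0 - l.2| < d.
Proof.
rewrite -ball_normE /ball_ /= prod_normE /= gt_max.
by split => [/andP [] | [-> ->]].
Qed.

Lemma N_pos (Heps : eps = 1 \/ eps = -1) (l : Ce R) :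
  ball (ce_one R) (1/2) l -> 0 < l.1 * l.1 - eps * (l.2 * l.2).
Proof.
move=> /ball_oneP [h1 h2]; move: h1 h2; rewrite !ltr_norml => /andP [a1 a2] /andP [b1 b2].
case: Heps => ->; nra.
Qed.

Lemma ball_path (l : Ce R) d (t : R) : ball (ce_one R) d l -> 0 <= t <= 1 ->
  ball (ce_one R) d (1 + t * (l.1 - 1), 0 + t * l.2).
Proof.
move=> /ball_oneP [h1 h2] /andP [t0 t1]; apply/ball_oneP => /=.
have e1 : 1 - (1 + t * (l.1 - 1)) = t * (1 - l.1) by ring.
have e2 : 0 - (0 + t * l.2) = t * (0 - l.2) by ring.
rewrite e1 e2 !normrM (ger0_norm t0).
have n1 := normr_ge0 (1 - l.1); have n2 := normr_ge0 (0 - l.2).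
split; nra.
Qed.

Definition L1c (c : Ce R) (t : R) := 1 + t * c.1.
Definition L2c (c : Ce R) (t : R) := 0 + t * c.2.
Definition Nc (c : Ce R) (t : R) := L1c c t * L1c c t - eps * (L2c c t * L2c c t).
Definition Pf (w : Cn R n -> Cn R n) (z V0 : Cn R n) j (t : R) := c1 j (w (t *: V0 + z)).
Definition Qf (w : Cn R n -> Cn R n) (z V0 : Cn R n) j (t : R) := c2 j (w (t *: V0 + z)).
Definition g1 w z c j t := (L1c c t * Pf w z (ce_smul eps c z) j t
   - eps * (L2c c t * Qf w z (ce_smul eps c z) j t)) * (Nc c t)^-1.
Definition g2 w z c j t := (L1c c t * Qf w z (ce_smul eps c z) j t
   - L2c c t * Pf w z (ce_smul eps c z) j t) * (Nc c t)^-1.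

Lemma g_deriv (w : Cn R n -> Cn R n) (z : Cn R n) (c : Ce R) (t : R) j :
  differentiable w (t *: ce_smul eps c z + z) ->
  (forall v, 'd w (t *: ce_smul eps c z + z) (Jn eps v) = Jn eps ('d w (t *: ce_smul eps c z + z) v)) ->
  'd w (t *: ce_smul eps c z + z) (t *: ce_smul eps c z + z) = w (t *: ce_smul eps c z + z) ->
  Nc c t != 0 ->
  is_derive t 1 (g1 w z c j) 0 /\ is_derive t 1 (g2 w z c j) 0.
Proof.
set V0 := ce_smul eps c z; set Y := t *: V0 + z => dw HJ HE HN.
have [d1 E1] := c1_comp j dw; have [d2 E2] := c2_comp j dw.
have hP : is_derive t 1 (Pf w z V0 j) (c1 j ('d w Y V0)).
  have := @line_derive _ _ _ (fun y => c1 j (w y)) z V0 t d1; rewrite E1.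
  by apply: isd_ext.
have hQ : is_derive t 1 (Qf w z V0 j) (c2 j ('d w Y V0)).
  have := @line_derive _ _ _ (fun y => c2 j (w y)) z V0 t d2; rewrite E2.
  by apply: isd_ext.
have hL1 : is_derive t 1 (L1c c) c.1 by apply: (isd_ext _ (isdA 1 c.1 t)).
have hL2 : is_derive t 1 (L2c c) c.2 by apply: (isd_ext _ (isdA 0 c.2 t)).
have hN : is_derive t 1 (Nc c) _ := isd_ext (fun s => erefl) (isdB (isdM hL1 hL1) (isdZ eps (isdM hL2 hL2))).
have hV := isdV HN hN.
have dV0 : 'd w Y V0 = ce_smul eps c ('d w Y z) by rewrite /V0 cJ_smul.
have wY : w Y = ce_smul eps (1 + t * c.1, 0 + t * c.2) ('d w Y z).
  have eY : Y = ce_smul eps (1 + t * c.1, 0 + t * c.2) z by rewrite path_eq -surjective_pairing.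
  rewrite -HE; transitivity ('d w Y (ce_smul eps (1 + t * c.1, 0 + t * c.2) z)).
    by rewrite -eY.
  by rewrite cJ_smul.
move: HN; rewrite /Nc /L1c /L2c add0r => HN.
split.
  have H := isdM (isdB (isdM hL1 hP) (isdZ eps (isdM hL2 hQ))) hV.
  have H' := isd_ext (g := g1 w z c j) (fun s => erefl) H.
  apply: is_derive_eq H' _.
  rewrite /Pf /Qf /Nc /L1c /L2c -/Y dV0 wY !c1_smul !c2_smul /=.
  field; exact: HN.
have H := isdM (isdB (isdM hL1 hQ) (isdM hL2 hP)) hV.
have H' := isd_ext (g := g2 w z c j) (fun s => erefl) H.
apply: is_derive_eq H' _.
rewrite /Pf /Qf /Nc /L1c /L2c -/Y dV0 wY !c1_smul !c2_smul /=.
field; exact: HN.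
Qed.

Lemma mvt01 (g : R -> R) : (forall t : R, 0 <= t <= 1 -> is_derive t (1:R) g 0) -> g 1 = g 0.
Proof.
move=> Hg.
have H1 : forall x : R, x \in `]0, 1[ -> is_derive x (1:R) g ((fun _ => 0) x).
  move=> x; rewrite in_itv /= => /andP [a b]; by apply: Hg; rewrite (ltW a) (ltW b).
have H2 : {within `[(0:R), 1], continuous g}.
  apply: continuous_in_subspaceT => x; rewrite inE /= in_itv /= => xin.
  have [dd _] := Hg x xin.
  exact/differentiable_continuous/derivable1_diffP.
have [x _ E] := MVT_segment ler01 H1 H2.
by apply/eqP; rewrite -subr_eq0 E mul0r.
Qed.

Lemma solve2 (l1 l2 P Q a b : R) : l1 * l1 - eps * (l2 * l2) != 0 ->
  (l1 * P - eps * (l2 * Q)) / (l1 * l1 - eps * (l2 * l2)) = 1 * a - eps * (0 * b) ->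
  (l1 * Q - l2 * P) / (l1 * l1 - eps * (l2 * l2)) = (1 * b - 0 * a) / 1 ->
  P = l1 * a + eps * l2 * b /\ Q = l1 * b + l2 * a.
Proof.
move=> HN A B.
have A' : a = (l1 * P - eps * (l2 * Q)) / (l1 * l1 - eps * (l2 * l2)) by rewrite A; ring.
have B' : b = (l1 * Q - l2 * P) / (l1 * l1 - eps * (l2 * l2)) by rewrite B divr1; ring.
by rewrite A' B'; split; field.
Qed.

Lemma hom_w (Heps : eps = 1 \/ eps = -1) (Ut : set (Cn R n)) (w : Cn R n -> Cn R n) z :
  open Ut ->
  (forall y, Ut y -> [/\ differentiable w y,
      (forall v, 'd w y (Jn eps v) = Jn eps ('d w y v)) & 'd w y y = w y]) ->
  Ut z -> exists W : set (Ce R), nbhs (ce_one R) W /\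
    forall l, W l -> Ut (ce_smul eps l z) /\ w (ce_smul eps l z) = ce_smul eps l (w z).
Proof.
move=> oU Hw Uz.
have nU : nbhs (ce_smul eps (ce_one R) z) Ut.
  by rewrite smul_one; apply: open_nbhs_nbhs; split.
have N1 := @smul_cont z (ce_one R) _ nU.
have /nbhs_ballP [d d0 Hd] := N1.
pose e := Num.min d (1/2).
have e0 : 0 < e by rewrite lt_min d0 divr_gt0.
have Hb : forall m, ball (ce_one R) e m -> Ut (ce_smul eps m z) /\ 0 < m.1 * m.1 - eps * (m.2 * m.2).
  move=> m Hm; split.
    by apply: Hd; apply: (le_ball _ Hm); rewrite ge_min lexx.
  by apply: N_pos => //; apply: (le_ball _ Hm); rewrite ge_min lexx orbT.
exists (ball (ce_one R) e); split; first exact: nbhsx_ballx.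
move=> l Hl; split; first by have [] := Hb l Hl.
pose c := (l.1 - 1, l.2).
have Ht : forall t : R, 0 <= t <= 1 -> Ut (t *: ce_smul eps c z + z) /\ Nc c t != 0.
  move=> t t01; have [H1 H2] := Hb _ (ball_path Hl t01).
  rewrite -path_eq; split => //; rewrite /Nc /L1c /L2c; exact: lt0r_neq0.
have Hg : forall j, g1 w z c j 1 = g1 w z c j 0 /\ g2 w z c j 1 = g2 w z c j 0.
  move=> j; split; apply: mvt01 => t t01; have [Ut' HN] := Ht t t01;
    have [dw HJ HE] := Hw _ Ut'; have [] := g_deriv j dw HJ HE HN => //.
have e1 : 1 *: ce_smul eps c z + z = ce_smul eps l z.
  rewrite -path_eq; congr ce_smul; rewrite [RHS]surjective_pairing /=; congr pair; ring.
have e0' : 0 *: ce_smul eps c z + z = z by rewrite scale0r add0r.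
have HN1 : l.1 * l.1 - eps * (l.2 * l.2) != 0 by have [_ ?] := Hb l Hl; exact: lt0r_neq0.
rewrite [LHS]surjective_pairing [RHS]surjective_pairing; congr pair; apply/rowP => k;
  have [A B] := Hg k; move: A B; rewrite /g1 /g2 /Pf /Qf /Nc /L1c /L2c e1 e0' /=.
all: move=> A B.
all: have s1 : 1 + 1 * (l.1 - 1) = l.1 by ring.
all: have s2 : 0 + 1 * l.2 = l.2 by ring.
all: have s3 : 1 + 0 * (l.1 - 1) = 1 by ring.
all: have s4 : 0 + 0 * l.2 = 0 by ring.
all: have s5 : (1:R) * 1 - eps * (0 * 0) = 1 by ring.
all: rewrite s1 s2 s3 s4 s5 divr1 /c1 /c2 in A B; rewrite !mxE.
- exact: (proj1 (solve2 HN1 A B)).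
- exact: (proj2 (solve2 HN1 A B)).
Qed.

End Main.

Section Main.
Variables (R : realType) (eps : R) (n : nat).

Lemma E1_diff (w : Cn R n -> Cn R n) y : differentiable w y -> differentiable (E1 eps w) y.
Proof.
move=> dw.
have -> : E1 eps w = \sum_(i < n) ((c1 i * (c1 i \o w)) + eps \*: (c2 i * (c2 i \o w))).
  by apply/funext => y'; rewrite /E1 fct_sumE; apply: eq_bigr => i _.
apply: differentiable_sum => i; apply: differentiableD; last apply: differentiableZ;
  apply: differentiableM.
- by have [did _] := did_val y y; have [] := c1_comp i did.
- by have [] := c1_comp i dw.
- by have [did _] := did_val y y; have [] := c2_comp i did.
- by have [] := c2_comp i dw.
Qed.

Lemma E2_diff (w : Cn R n -> Cn R n) y : differentiable w y -> differentiable (E2 w) y.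
Proof.
move=> dw.
have -> : E2 w = \sum_(i < n) ((c1 i * (c2 i \o w)) + (c2 i * (c1 i \o w))).
  by apply/funext => y'; rewrite /E2 fct_sumE; apply: eq_bigr => i _.
apply: differentiable_sum => i; apply: differentiableD; apply: differentiableM.
- by have [did _] := did_val y y; have [] := c1_comp i did.
- by have [] := c2_comp i dw.
- by have [did _] := did_val y y; have [] := c2_comp i did.
- by have [] := c1_comp i dw.
Qed.

Definition Fp (w : Cn R n -> Cn R n) (y : Cn R n) : Ce R := (2^-1 * E1 eps w y, 2^-1 * E2 w y).

Lemma Fp_diff (w : Cn R n -> Cn R n) y : differentiable w y ->
  differentiable (Fp w) y /\ forall v, 'd (Fp w) y v =
   (2^-1 * \sum_(i < n) ((c1 i y * c1 i ('d w y v) + c1 i (w y) * c1 i v)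
     + eps * (c2 i y * c2 i ('d w y v) + c2 i (w y) * c2 i v)),
    2^-1 * \sum_(i < n) ((c1 i y * c2 i ('d w y v) + c2 i (w y) * c1 i v)
     + (c2 i y * c1 i ('d w y v) + c1 i (w y) * c2 i v))).
Proof.
move=> dw.
have d1 : differentiable ((2:R)^-1 \*: E1 eps w) y by apply: differentiableZ; exact: E1_diff.
have d2 : differentiable ((2:R)^-1 \*: E2 w) y by apply: differentiableZ; exact: E2_diff.
have -> : Fp w = (fun y => (((2:R)^-1 \*: E1 eps w) y, ((2:R)^-1 \*: E2 w) y)) by [].
split; first exact: differentiable_pair.
move=> v; rewrite diff_pair //; congr pair.
  apply: (isd_uniq (diff_isd v d1)); exact: (isdZ _ (E1_isd eps v dw)).
apply: (isd_uniq (diff_isd v d2)); exact: (isdZ _ (E2_isd v dw)).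
Qed.

Lemma bwd (Heps : eps = 1 \/ eps = -1) (Ut : set (Cn R n)) (w : Cn R n -> Cn R n) :
  open Ut -> holomorphic_immersion eps Ut (graph w) -> Lagrangian eps Ut (graph w) ->
  conical Ut (graph w) ->
  exists F : Cn R n -> Ce R, prepotential eps Ut w F /\ homogeneous eps Ut 2 F.
Proof.
move=> oU Hi HL Hc.
have Hf : forall y, Ut y -> [/\ differentiable w y,
    (forall v, 'd w y (Jn eps v) = Jn eps ('d w y v)),
    (forall u v, Omega eps (u, 'd w y u) (v, 'd w y v) = (0, 0)) & 'd w y y = w y].
  move=> y Uy; have [dw Eg HJ HO] := point_facts Hi HL Uy; split => //.
  have [v Hv] := Hc y Uy; move: Hv; rewrite Eg /graph => -[ev].
  by rewrite ev.
exists (Fp w); split; first split.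
- move=> y Uy; have [dw HJ _ _] := Hf y Uy; have [dF EF] := Fp_diff dw; split => // v.
  rewrite !EF HJ /J1 /ce_mul /ce_i /=; congr pair;
    rewrite !mulr_sumr -?big_split /=; apply: eq_bigr => i _; rewrite !c1J !c2J; ring.
- move=> y Uy j; have [dw HJ HO HE] := Hf y Uy; have [dF EF] := Fp_diff dw.
  rewrite EF /coord; congr pair.
    have -> : \sum_(i < n) ((c1 i y * c1 i ('d w y (ebasis R j)) + c1 i (w y) * c1 i (ebasis R j))
       + eps * (c2 i y * c2 i ('d w y (ebasis R j)) + c2 i (w y) * c2 i (ebasis R j))) =
       \sum_(i < n) (c1 i y * c1 j ('d w y (ebasis R i)) + eps * (c2 i y * c2 j ('d w y (ebasis R i))))
       + \sum_(i < n) c1 i (w y) * (i == j)%:R.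
      rewrite -big_split; apply: eq_bigr => i _ /=.
      have [s1 s2] := lag_sym HO i j.
      rewrite s1 s2 c1e c2e; ring.
    rewrite sum_delta; have [<- _] := euler_n HJ y j.
    by rewrite HE /c1; field.
  have -> : \sum_(i < n) ((c1 i y * c2 i ('d w y (ebasis R j)) + c2 i (w y) * c1 i (ebasis R j))
     + (c2 i y * c1 i ('d w y (ebasis R j)) + c1 i (w y) * c2 i (ebasis R j))) =
     \sum_(i < n) (c1 i y * c2 j ('d w y (ebasis R i)) + c2 i y * c1 j ('d w y (ebasis R i)))
     + \sum_(i < n) c2 i (w y) * (i == j)%:R.
    rewrite -big_split; apply: eq_bigr => i _ /=.
    have [s1 s2] := lag_sym HO i j.
    rewrite s1 s2 c1e c2e; ring.
  rewrite sum_delta; have [_ <-] := euler_n HJ y j.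
  by rewrite HE /c2; field.
- move=> z Uz.
  have Hw : forall y, Ut y -> [/\ differentiable w y,
      (forall v, 'd w y (Jn eps v) = Jn eps ('d w y v)) & 'd w y y = w y].
    by move=> y Uy; have [] := Hf y Uy.
  have [W [HW HWh]] := hom_w Heps oU Hw Uz.
  exists W; split => // l Wl; have [Ul El] := HWh l Wl; split => //.
  rewrite /Fp /E1 /E2 El /ce_mul /ce_exp /ce_one /=; congr pair;
    rewrite !mulr_sumr -?big_split /=; apply: eq_bigr => i _;
    rewrite !c1_smul !c2_smul; ring.
Qed.

End Main.

Unset Implicit Arguments.
Set Strict Implicit.

Theorem mainTheorem5 (R : realType) (eps : R) (n : nat)
  (Ut : set (Cn R n)) (w : Cn R n -> Cn R n) (F : Cn R n -> Ce R) :
  (eps = 1 \/ eps = -1) ->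
  open Ut -> connected Ut ->
  holomorphic_immersion eps Ut (graph w) ->
  eps_Kaehlerian eps Ut (graph w) ->
  Lagrangian eps Ut (graph w) ->
  prepotential eps Ut w F ->
  (exists F' : Cn R n -> Ce R,
      prepotential eps Ut w F' /\ homogeneous eps Ut 2 F')
  <-> conical Ut (graph w).
Proof.
move=> Heps oU cU Hi HK HL HF; split.
- by move=> [F' [HF' Hh]]; exact: (fwd oU Hi HL HF' Hh).
- by move=> Hc; exact: (bwd Heps oU Hi HL Hc).
Qed.
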